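(* Let $H_n$ be the normal closure in $VB_n$ of the subgroup generated by $\sigma_1,\dots,\sigma_{n-1}$. Then $H_n$ is generated by the elements $x_{k,l}$, $1\le k\neq l\le n$, and admits the presentation with these generators and defining relations $$x_{i,j}x_{k,l}=x_{k,l}x_{i,j}\quad(i,j,k,l\text{ pairwise distinct}),$$ $$x_{i,k}x_{k,j}x_{i,k}=x_{k,j}x_{i,k}x_{k,j}\quad(i,j,k\text{ pairwise distinct}).$$
   Context: The virtual braid group $VB_n$ is the group with generators $\sigma_i,\rho_i$ ($i=1,\dots,n-1$) and defining relations: $\sigma_i\sigma_{i+1}\sigma_i=\sigma_{i+1}\sigma_i\sigma_{i+1}$ ($1\le i\le n-2$); $\sigma_i\sigma_j=\sigma_j\sigma_i$ ($|i-j|\geq 2$); $\rho_i\rho_{i+1}\rho_i=\rho_{i+1}\rho_i\rho_{i+1}$ ($1\le i\le n-2$); $\rho_i\rho_j=\rho_j\rho_i$ ($|i-j|\geq 2$); $\rho_i^2=1$; $\sigma_i\rho_j=\rho_j\sigma_i$ ($|i-j|\geq2$); $\rho_i\rho_{i+1}\sigma_i=\sigma_{i+1}\rho_i\rho_{i+1}$ ($1\le i\le n-2$). $H_n$ equals the kernel of the homomorphism $\mu:VB_n\to S_n$, $\mu(\sigma_i)=1$, $\mu(\rho_i)=(i\ i{+}1)$. Elements of $VB_n$: $x_{i,i+1}=\sigma_i$; $x_{i,j}=\rho_{j-1}\cdots\rho_{i+1}\sigma_i\rho_{i+1}\cdots\rho_{j-1}$ for $1\le i<j-1\le n-1$; $x_{i+1,i}=\rho_i\sigma_i\rho_i$;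 $x_{j,i}=\rho_{j-1}\cdots\rho_{i+1}\rho_i\sigma_i\rho_i\rho_{i+1}\cdots\rho_{j-1}$ for $1\le i<j-1\le n-1$. *)

(* Defs.v *)
From mathcomp Require Import all_boot.
Set Implicit Arguments. Unset Strict Implicit. Unset Printing Implicit Defensive.

(* A word over generators G: letters (b, g) mean g if b = false, g^-1 if b = true. *)
Definition word (G : Type) := seq (bool * G).

Definition inv_word (G : Type) (w : word G) : word G :=
  rev (map (fun l : bool * G => (~~ l.1, l.2)) w).

Inductive grp_eq (G : Type) (R : word G -> word G -> Prop) : word G -> word G -> Prop :=
| ge_refl w : grp_eq R w w
| ge_sym u v : grp_eq R u v -> grp_eq R v u
| ge_trans u v w : grp_eq R u v -> grp_eq R v w -> grp_eq R u w
| ge_cat u u' v v' : grp_eq R u u' -> grp_eq R v v' -> grp_eq R (u ++ v) (u' ++ v')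
| ge_cancel (b : bool) (g : G) : grp_eq R [:: (b, g); (~~ b, g)] [::]
| ge_rel u v : R u v -> grp_eq R u v.

(* Generators of VB_n: Sig i = sigma_(i+1), Rho i = rho_(i+1), i : 'I_(n-1). *)
Inductive VBgen (n : nat) : Type :=
| Sig of 'I_n.-1
| Rho of 'I_n.-1.

Definition sg {n} (i : 'I_n.-1) : bool * VBgen n := (false, Sig i).
Definition rh {n} (i : 'I_n.-1) : bool * VBgen n := (false, Rho i).

Definition far (i j : nat) : bool := (i + 2 <= j) || (j + 2 <= i).

(* Defining relations of VB_n (indices shifted by one; only differences matter). *)
Inductive VBrel (n : nat) : word (VBgen n) -> word (VBgen n) -> Prop :=
| vb_braid_s (i j : 'I_n.-1) : val j = (val i).+1 ->
    VBrel [:: sg i; sg j; sg i] [:: sg j; sg i; sg j]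
| vb_comm_s (i j : 'I_n.-1) : far i j -> VBrel [:: sg i; sg j] [:: sg j; sg i]
| vb_braid_r (i j : 'I_n.-1) : val j = (val i).+1 ->
    VBrel [:: rh i; rh j; rh i] [:: rh j; rh i; rh j]
| vb_comm_r (i j : 'I_n.-1) : far i j -> VBrel [:: rh i; rh j] [:: rh j; rh i]
| vb_inv_r (i : 'I_n.-1) : VBrel [:: rh i; rh i] [::]
| vb_comm_sr (i j : 'I_n.-1) : far i j -> VBrel [:: sg i; rh j] [:: rh j; sg i]
| vb_mixed (i j : 'I_n.-1) : val j = (val i).+1 ->
    VBrel [:: rh i; rh j; sg i] [:: sg j; rh i; rh j].

Definition VBeq (n : nat) := grp_eq (@VBrel n).

(* H_n : normal closure of <sigma_1,...,sigma_(n-1)> in VB_n, i.e. the elements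
   equal to a product of conjugates c sigma_i^(+-1) c^-1. *)
Definition in_H (n : nat) (w : word (VBgen n)) : Prop :=
  exists cs : seq (word (VBgen n) * bool * 'I_n.-1),
    VBeq w (flatten [seq t.1.1 ++ (t.1.2, Sig t.2) :: inv_word t.1.1 | t <- cs]).

(* single-letter words from nat indices (always in range where used below) *)
Definition sig_at (n m : nat) : word (VBgen n) :=
  if insub m is Some i then [:: (false, Sig i)] else [::].
Definition rho_at (n m : nat) : word (VBgen n) :=
  if insub m is Some i then [:: (false, Rho i)] else [::].

(* x_{k,l} (0-based k, l : 'I_n; paper indices k+1, l+1).  With a = min, b = max:
   P = rho_(b-1) ... rho_(a+1) (ordinals), and
   x_{a,b} = P sigma_a P^rev,   x_{b,a} = P rho_a sigma_a rho_a P^rev. *)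
Definition xw (n : nat) (k l : 'I_n) : word (VBgen n) :=
  let a := minn k l in let b := maxn k l in
  let P := flatten [seq rho_at n m | m <- rev (iota a.+1 (b - a.+1))] in
  P ++ (if k < l then sig_at n a else rho_at n a ++ sig_at n a ++ rho_at n a) ++ rev P.

Definition Hgen (n : nat) := {p : 'I_n * 'I_n | p.1 != p.2}.

Definition xg (n : nat) (g : Hgen n) : word (VBgen n) := xw (val g).1 (val g).2.

Definition phi (n : nat) (u : word (Hgen n)) : word (VBgen n) :=
  flatten [seq (if l.1 then inv_word (xg l.2) else xg l.2) | l <- u].

Definition xl {n} (g : Hgen n) : bool * Hgen n := (false, g).

Inductive Hrel (n : nat) : word (Hgen n) -> word (Hgen n) -> Prop :=
| h_comm (g h : Hgen n) :
    [&& (val g).1 != (val h).1, (val g).1 != (val h).2,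
        (val g).2 != (val h).1 & (val g).2 != (val h).2] ->
    Hrel [:: xl g; xl h] [:: xl h; xl g]
| h_braid (g h : Hgen n) :
    (val g).2 = (val h).1 -> (val g).1 != (val h).2 ->
    Hrel [:: xl g; xl h; xl g] [:: xl h; xl g; xl h].

Definition Heq (n : nat) := grp_eq (@Hrel n).

(* Main.v *)
Require Import Defs.
From mathcomp Require Import all_boot.
From mathcomp Require Import zify.
From Stdlib Require Import Setoid Morphisms.
Set Implicit Arguments. Unset Strict Implicit. Unset Printing Implicit Defensive.


Section Generic.
Variables (G : Type) (R : word G -> word G -> Prop).

Global Instance grp_eq_equiv : Equivalence (@grp_eq G R).
Proof. split; [exact: ge_refl | exact: ge_sym | exact: ge_trans]. Qed.

Global Instance cat_proper :
  Proper (@grp_eq G R ==> @grp_eq G R ==> @grp_eq G R) (@cat (bool * G)).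
Proof. by move=> u u' Hu v v' Hv; apply: ge_cat. Qed.

Lemma inv_word_cat (u v : word G) : inv_word (u ++ v) = inv_word v ++ inv_word u.
Proof. by rewrite /inv_word map_cat rev_cat. Qed.

Lemma inv_wordK (u : word G) : inv_word (inv_word u) = u.
Proof.
rewrite /inv_word map_rev revK -map_comp -[RHS]map_id.
by apply: eq_map => -[b g] /=; rewrite negbK.
Qed.

Lemma inv_word_cons (x : bool * G) u :
  inv_word (x :: u) = inv_word u ++ [:: (~~ x.1, x.2)].
Proof. by rewrite /inv_word /= rev_cons cats1. Qed.

Lemma cancel_r (w : word G) : grp_eq R (w ++ inv_word w) [::].
Proof.
elim: w => [|x w IH] //=; first reflexivity.
rewrite inv_word_cons.
have -> : x :: w ++ (inv_word w ++ [:: (~~ x.1, x.2)]) =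
   [:: x] ++ (w ++ inv_word w) ++ [:: (~~ x.1, x.2)] by rewrite /= catA.
rewrite IH /=. case: x => b g. exact: ge_cancel.
Qed.

Lemma cancel_l (w : word G) : grp_eq R (inv_word w ++ w) [::].
Proof. by have := cancel_r (inv_word w); rewrite inv_wordK. Qed.

Lemma inv_congr u v : grp_eq R u v -> grp_eq R (inv_word u) (inv_word v).
Proof.
move=> H.
transitivity (inv_word u ++ (v ++ inv_word v)); first by rewrite (cancel_r v) cats0; reflexivity.
transitivity (inv_word u ++ (u ++ inv_word v)).
  apply: ge_cat; [reflexivity | apply: ge_cat; [symmetry; exact: H | reflexivity]].
rewrite catA cancel_l. reflexivity.
Qed.
End Generic.


Section VB.
Variable n : nat.
Local Notation N := n.-1.
Local Notation VB := (grp_eq (@VBrel n)).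
Local Notation R := (rho_at n).
Local Notation S := (sig_at n).

Lemma rho_at_lt m (H : m < N) : R m = [:: rh (Ordinal H)].
Proof. by rewrite /rho_at insubT. Qed.
Lemma sig_at_lt m (H : m < N) : S m = [:: sg (Ordinal H)].
Proof. by rewrite /sig_at insubT. Qed.

Lemma rr m w : m < N -> VB (R m ++ R m ++ w) w.
Proof.
move=> H; rewrite (rho_at_lt H) /=.
transitivity ([:: rh (Ordinal H); rh (Ordinal H)] ++ w); first reflexivity.
rewrite (ge_rel (vb_inv_r (Ordinal H))). reflexivity.
Qed.

Lemma rr0 m : m < N -> VB (R m ++ R m) [::].
Proof. by move=> H; have := rr [::] H; rewrite cats0. Qed.

Lemma rcomm m p w : m < N -> p < N -> far m p -> VB (R m ++ R p ++ w) (R p ++ R m ++ w).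
Proof.
move=> Hm Hp Hf; rewrite (rho_at_lt Hm) (rho_at_lt Hp) /=.
transitivity ([:: rh (Ordinal Hm); rh (Ordinal Hp)] ++ w); first reflexivity.
rewrite (ge_rel (vb_comm_r (i:=Ordinal Hm) (j:=Ordinal Hp) Hf)). reflexivity.
Qed.

Lemma rbraid m w : m.+1 < N ->
  VB (R m ++ R m.+1 ++ R m ++ w) (R m.+1 ++ R m ++ R m.+1 ++ w).
Proof.
move=> H; have Hm : m < N by lia.
rewrite (rho_at_lt Hm) (rho_at_lt H) /=.
transitivity ([:: rh (Ordinal Hm); rh (Ordinal H); rh (Ordinal Hm)] ++ w); first reflexivity.
rewrite (ge_rel (vb_braid_r (i:=Ordinal Hm) (j:=Ordinal H) erefl)). reflexivity.
Qed.

Lemma scomm m p w : m < N -> p < N -> far m p -> VB (S m ++ S p ++ w) (S p ++ S m ++ w).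
Proof.
move=> Hm Hp Hf; rewrite (sig_at_lt Hm) (sig_at_lt Hp) /=.
transitivity ([:: sg (Ordinal Hm); sg (Ordinal Hp)] ++ w); first reflexivity.
rewrite (ge_rel (vb_comm_s (i:=Ordinal Hm) (j:=Ordinal Hp) Hf)). reflexivity.
Qed.

Lemma sbraid m w : m.+1 < N ->
  VB (S m ++ S m.+1 ++ S m ++ w) (S m.+1 ++ S m ++ S m.+1 ++ w).
Proof.
move=> H; have Hm : m < N by lia.
rewrite (sig_at_lt Hm) (sig_at_lt H) /=.
transitivity ([:: sg (Ordinal Hm); sg (Ordinal H); sg (Ordinal Hm)] ++ w); first reflexivity.
rewrite (ge_rel (vb_braid_s (i:=Ordinal Hm) (j:=Ordinal H) erefl)). reflexivity.
Qed.

Lemma srcomm m p w : m < N -> p < N -> far m p -> VB (S m ++ R p ++ w) (R p ++ S m ++ w).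
Proof.
move=> Hm Hp Hf; rewrite (sig_at_lt Hm) (rho_at_lt Hp) /=.
transitivity ([:: sg (Ordinal Hm); rh (Ordinal Hp)] ++ w); first reflexivity.
rewrite (ge_rel (vb_comm_sr (i:=Ordinal Hm) (j:=Ordinal Hp) Hf)). reflexivity.
Qed.

Lemma rscomm m p w : m < N -> p < N -> far m p -> VB (R p ++ S m ++ w) (S m ++ R p ++ w).
Proof. by move=> *; symmetry; apply: srcomm. Qed.

Lemma mixed m w : m.+1 < N ->
  VB (R m ++ R m.+1 ++ S m ++ w) (S m.+1 ++ R m ++ R m.+1 ++ w).
Proof.
move=> H; have Hm : m < N by lia.
rewrite (sig_at_lt Hm) (rho_at_lt Hm) (rho_at_lt H) (sig_at_lt H) /=.
transitivity ([:: rh (Ordinal Hm); rh (Ordinal H); sg (Ordinal Hm)] ++ w); first reflexivity.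
rewrite (ge_rel (vb_mixed (i:=Ordinal Hm) (j:=Ordinal H) erefl)). reflexivity.
Qed.

Lemma L6 m w : m.+1 < N ->
  VB (R m ++ R m.+1 ++ S m ++ R m.+1 ++ R m ++ w) (S m.+1 ++ w).
Proof.
move=> H; have Hm : m < N by lia.
rewrite (mixed _ H) (rr _ H) (rr _ Hm). reflexivity.
Qed.

Lemma L7 m w : m.+1 < N ->
  VB (R m ++ S m.+1 ++ R m ++ w) (R m.+1 ++ S m ++ R m.+1 ++ w).
Proof.
move=> H; have Hm : m < N by lia.
rewrite -(L6 (R m ++ w) H) (rr _ Hm) (rr _ Hm). reflexivity.
Qed.

Lemma L8 m w : m.+1 < N ->
  VB (R m ++ R m.+1 ++ S m.+1 ++ R m.+1 ++ R m ++ w)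
     (R m.+1 ++ R m ++ S m ++ R m ++ R m.+1 ++ w).
Proof.
move=> H; have Hm : m < N by lia.
rewrite -(L6 (R m.+1 ++ R m ++ w) H).
rewrite (rbraid _ H) (rr _ H).
rewrite -(rbraid (R m ++ w) H) (rr _ Hm). reflexivity.
Qed.

Lemma rho_inv (i : 'I_N) : VB [:: (true, Rho i)] [:: rh i].
Proof.
transitivity ([:: (true, Rho i)] ++ [:: rh i; rh i]).
  rewrite (ge_rel (vb_inv_r i)). reflexivity.
change (VB ([:: (true, Rho i); (false, Rho i)] ++ [:: rh i]) [:: rh i]).
rewrite (ge_cancel _ true (Rho i)). reflexivity.
Qed.

End VB.


Definition sw (m x : nat) : nat := if x == m then m.+1 else if x == m.+1 then m else x.
Lemma sw_m m : sw m m = m.+1. Proof. by rewrite /sw eqxx. Qed.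
Lemma sw_m1 m : sw m m.+1 = m. Proof. rewrite /sw ifF ?eqxx //; apply/eqP; lia. Qed.
Lemma sw_o m x : x != m -> x != m.+1 -> sw m x = x.
Proof. by rewrite /sw => /negPf -> /negPf ->. Qed.
Lemma swK m x : sw m (sw m x) = x.
Proof. rewrite /sw; repeat case: eqP => //; lia. Qed.

Section VBC.
Variable n : nat.
Local Notation N := n.-1.
Local Notation VB := (grp_eq (@VBrel n)).
Local Notation R := (rho_at n).
Local Notation S := (sig_at n).

Definition rw (l : seq nat) : word (VBgen n) := flatten [seq R m | m <- l].
Definition Dw a b := rw (rev (iota a.+1 (b - a.+1))).
Definition Uw a b := rw (iota a.+1 (b - a.+1)).
Definition xwn (k l : nat) : word (VBgen n) :=
  let a := minn k l in let b := maxn k l in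
  Dw a b ++ (if k < l then S a else R a ++ S a ++ R a) ++ rev (Dw a b).

Lemma xw_xwn (k l : 'I_n) : xw k l = xwn k l.
Proof. by []. Qed.

Lemma rw_cons m l : rw (m :: l) = R m ++ rw l. Proof. by []. Qed.
Lemma rw_cat l1 l2 : rw (l1 ++ l2) = rw l1 ++ rw l2.
Proof. by rewrite /rw map_cat flatten_cat. Qed.
Lemma rev_R m : rev (R m) = R m.
Proof. by rewrite /rho_at; case: insub. Qed.
Lemma rev_rw l : rev (rw l) = rw (rev l).
Proof.
elim: l => [|m l IH] //.
by rewrite rw_cons rev_cat IH rev_R rev_cons -cats1 rw_cat /rw /= cats0.
Qed.
Lemma revD a b : rev (Dw a b) = Uw a b.
Proof. by rewrite /Dw rev_rw revK. Qed.

Lemma iota_split a b c : a < c < b ->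
  iota a.+1 (b - a.+1) = iota a.+1 (c - a.+1) ++ c :: iota c.+1 (b - c.+1).
Proof.
move=> H.
have -> : b - a.+1 = (c - a.+1) + (b - c.+1).+1 by lia.
rewrite iotaD. have -> : a.+1 + (c - a.+1) = c by lia. by [].
Qed.

Lemma D_split a b c : a < c < b -> Dw a b = Dw c b ++ R c ++ Dw a c.
Proof.
move=> H; rewrite /Dw (iota_split H) rev_cat rev_cons -cats1 !rw_cat.
by rewrite /rw /= cats0 catA.
Qed.
Lemma U_split a b c : a < c < b -> Uw a b = Uw a c ++ R c ++ Uw c b.
Proof. by move=> H; rewrite /Uw (iota_split H) rw_cat rw_cons. Qed.
Lemma D0 a : Dw a a.+1 = [::]. Proof. by rewrite /Dw subnn. Qed.
Lemma U0 a : Uw a a.+1 = [::]. Proof. by rewrite /Uw subnn. Qed.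

Lemma xwn_lt k l : k < l -> xwn k l = Dw k l ++ S k ++ Uw k l.
Proof.
move=> H; rewrite /xwn (minn_idPl (ltnW H)) (maxn_idPr (ltnW H)) H revD //.
Qed.
Lemma xwn_gt k l : l < k -> xwn k l = Dw l k ++ (R l ++ S l ++ R l) ++ Uw l k.
Proof.
move=> H; rewrite /xwn (minn_idPr (ltnW H)) (maxn_idPl (ltnW H)) revD.
by rewrite ltnNge (ltnW H).
Qed.

Lemma Rj_rw j l w : j < N -> all (fun m => (m < N) && far j m) l ->
  VB (R j ++ rw l ++ w) (rw l ++ R j ++ w).
Proof.
move=> Hj; elim: l => [|m l IH] /=; first reflexivity.
case/andP => /andP [Hm Hf] Hl.
rewrite rw_cons -!catA (rcomm _ Hj Hm Hf) (IH Hl). reflexivity.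
Qed.

Lemma all_int (P : pred nat) a b :
  (forall m, a < m < b -> P m) -> all P (iota a.+1 (b - a.+1)).
Proof.
move=> H; apply/allP => m; rewrite mem_iota => Hm; apply: H; lia.
Qed.

Lemma Rj_D j a b w : j < N -> b <= N -> (j < a) || (b < j) ->
  VB (R j ++ Dw a b ++ w) (Dw a b ++ R j ++ w).
Proof.
move=> Hj Hb Hf; apply: Rj_rw => //; rewrite all_rev; apply: all_int => m Hm.
apply/andP; split; rewrite /far; lia.
Qed.
Lemma Rj_U j a b w : j < N -> b <= N -> (j < a) || (b < j) ->
  VB (R j ++ Uw a b ++ w) (Uw a b ++ R j ++ w).
Proof.
move=> Hj Hb Hf; apply: Rj_rw => //; apply: all_int => m Hm.
apply/andP; split; rewrite /far; lia.
Qed.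

Lemma int_D j a b w : a < j -> j.+1 < b -> b <= N ->
  VB (R j ++ Dw a b ++ w) (Dw a b ++ R j.+1 ++ w).
Proof.
move=> H1 H2 Hb.
have E : Dw a b = Dw j.+1 b ++ R j.+1 ++ R j ++ Dw a j.
  rewrite (@D_split a b j.+1) ?(@D_split a j.+1 j) ?D0 //; lia.
rewrite E -!catA (@Rj_D j j.+1 b) ?(rbraid _ (_ : j.+1 < N)); try lia.
rewrite (@Rj_D j.+1 a j); try lia. reflexivity.
Qed.

Lemma int_U j a b w : a < j -> j.+1 < b -> b <= N ->
  VB (Uw a b ++ R j ++ w) (R j.+1 ++ Uw a b ++ w).
Proof.
move=> H1 H2 Hb.
have E : Uw a b = Uw a j ++ R j ++ R j.+1 ++ Uw j.+1 b.
  rewrite (@U_split a b j.+1) ?(@U_split a j.+1 j) ?U0 ?cats0 -?catA //; lia.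
rewrite E -!catA -(@Rj_U j j.+1 b) ?(rbraid _ (_ : j.+1 < N)); try lia.
rewrite -(@Rj_U j.+1 a j); try lia. reflexivity.
Qed.

End VBC.


Ltac sc := try (unfold far; lia).

Section Conj.
Variable n : nat.
Local Notation N := n.-1.
Local Notation VB := (grp_eq (@VBrel n)).
Local Notation R := (rho_at n).
Local Notation S := (sig_at n).
Local Notation Dw := (@Dw n).
Local Notation Uw := (@Uw n).
Local Notation xwn := (@xwn n).

Lemma conj_lt j a b w : j < N -> a < b -> b <= N ->
  VB (R j ++ xwn a b ++ R j ++ w) (xwn (sw j a) (sw j b) ++ w).
Proof.
move=> Hj Hab Hb.
case: (ltnP j.+1 a) => h1.
  rewrite !sw_o; sc. rewrite xwn_lt // -!catA.
  rewrite (@Rj_D _ j a b); sc. rewrite (@rscomm _ a j); sc.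
  rewrite (@Rj_U _ j a b); sc. rewrite rr; sc. reflexivity.
case: (ltnP b j) => h2.
  rewrite !sw_o; sc. rewrite xwn_lt // -!catA.
  rewrite (@Rj_D _ j a b); sc. rewrite (@rscomm _ a j); sc.
  rewrite (@Rj_U _ j a b); sc. rewrite rr; sc. reflexivity.
case: (eqVneq j.+1 a) => h3.
  subst a. rewrite sw_m1 (@sw_o j b); sc.
  rewrite !xwn_lt; sc.
  rewrite (@D_split _ j b j.+1); sc. rewrite (@U_split _ j b j.+1); sc.
  rewrite D0 U0 /= -!catA.
  rewrite (@Rj_D _ j j.+1 b); sc. rewrite -(@Rj_U _ j j.+1 b); sc.
  rewrite L7; sc. reflexivity.
case: (eqVneq j a) => h4.
  subst a. rewrite sw_m.
  case: (eqVneq b j.+1) => h5.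
    subst b. rewrite sw_m1 xwn_lt // xwn_gt // !D0 !U0 /= ?cats0 -!catA. reflexivity.
  rewrite (@sw_o j b); sc. rewrite !xwn_lt; sc.
  rewrite (@D_split _ j b j.+1); sc. rewrite (@U_split _ j b j.+1); sc.
  rewrite D0 U0 /= ?cats0 -!catA.
  rewrite (@Rj_D _ j j.+1 b); sc. rewrite -(@Rj_U _ j j.+1 b); sc.
  rewrite L6; sc. reflexivity.
case: (eqVneq j b) => h6.
  subst b. rewrite sw_m (@sw_o j a); sc. rewrite !xwn_lt; sc.
  rewrite (@D_split _ a j.+1 j); sc. rewrite (@U_split _ a j.+1 j); sc.
  rewrite D0 U0 ?cats0 -!catA. reflexivity.
case: (eqVneq j.+1 b) => h7.
  subst b. rewrite sw_m1 (@sw_o j a); sc. rewrite !xwn_lt; sc.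
  rewrite (@D_split _ a j.+1 j); sc. rewrite (@U_split _ a j.+1 j); sc.
  rewrite D0 U0 ?cats0 -!catA.
  rewrite rr; sc. rewrite rr; sc. reflexivity.
rewrite !sw_o; sc. rewrite xwn_lt // -!catA.
rewrite (@int_D _ j a b); sc. rewrite (@int_U _ j a b); sc.
rewrite (@rscomm _ a j.+1); sc. rewrite rr; sc. reflexivity.
Qed.


Lemma conj_gt j a b w : j < N -> a < b -> b <= N ->
  VB (R j ++ xwn b a ++ R j ++ w) (xwn (sw j b) (sw j a) ++ w).
Proof.
move=> Hj Hab Hb.
case: (ltnP j.+1 a) => h1.
  rewrite !sw_o; sc. rewrite xwn_gt // -!catA.
  rewrite (@Rj_D _ j a b); sc. rewrite (@rcomm _ j a); sc.
  rewrite (@rscomm _ a j); sc. rewrite (@rcomm _ j a); sc.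
  rewrite (@Rj_U _ j a b); sc. rewrite rr; sc. reflexivity.
case: (ltnP b j) => h2.
  rewrite !sw_o; sc. rewrite xwn_gt // -!catA.
  rewrite (@Rj_D _ j a b); sc. rewrite (@rcomm _ j a); sc.
  rewrite (@rscomm _ a j); sc. rewrite (@rcomm _ j a); sc.
  rewrite (@Rj_U _ j a b); sc. rewrite rr; sc. reflexivity.
case: (eqVneq j.+1 a) => h3.
  subst a. rewrite sw_m1 (@sw_o j b); sc.
  rewrite !xwn_gt; sc.
  rewrite (@D_split _ j b j.+1); sc. rewrite (@U_split _ j b j.+1); sc.
  rewrite D0 U0 /= -!catA.
  rewrite (@Rj_D _ j j.+1 b); sc. rewrite -(@Rj_U _ j j.+1 b); sc.
  rewrite L8; sc. reflexivity.
case: (eqVneq j a) => h4.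
  subst a. rewrite sw_m.
  case: (eqVneq b j.+1) => h5.
    subst b. rewrite sw_m1 (@xwn_lt _ j j.+1) // (@xwn_gt _ j.+1 j) // !D0 !U0 /= ?cats0 -!catA.
    rewrite rr; sc. rewrite rr; sc. reflexivity.
  rewrite (@sw_o j b); sc. rewrite !xwn_gt; sc.
  rewrite (@D_split _ j b j.+1); sc. rewrite (@U_split _ j b j.+1); sc.
  rewrite D0 U0 /= ?cats0 -!catA.
  rewrite (@Rj_D _ j j.+1 b); sc. rewrite -(@Rj_U _ j j.+1 b); sc.
  rewrite rbraid; sc. rewrite rbraid; sc. rewrite L6; sc. reflexivity.
case: (eqVneq j b) => h6.
  subst b. rewrite sw_m (@sw_o j a); sc. rewrite !xwn_gt; sc.
  rewrite (@D_split _ a j.+1 j); sc. rewrite (@U_split _ a j.+1 j); sc.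
  rewrite D0 U0 ?cats0 -!catA. reflexivity.
case: (eqVneq j.+1 b) => h7.
  subst b. rewrite sw_m1 (@sw_o j a); sc. rewrite !xwn_gt; sc.
  rewrite (@D_split _ a j.+1 j); sc. rewrite (@U_split _ a j.+1 j); sc.
  rewrite D0 U0 ?cats0 -!catA.
  rewrite rr; sc. rewrite rr; sc. reflexivity.
rewrite !sw_o; sc. rewrite xwn_gt // -!catA.
rewrite (@int_D _ j a b); sc. rewrite (@int_U _ j a b); sc.
rewrite (@rcomm _ j.+1 a); sc. rewrite (@rscomm _ a j.+1); sc.
rewrite (@rcomm _ j.+1 a); sc. rewrite rr; sc. reflexivity.
Qed.

Lemma conj_x j k l w : j < N -> k < n -> l < n -> k != l ->
  VB (R j ++ xwn k l ++ R j ++ w) (xwn (sw j k) (sw j l) ++ w).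
Proof.
move=> Hj Hk Hl Hkl.
case: (ltngtP k l) => H; last by rewrite H eqxx in Hkl.
  apply: conj_lt => //; lia.
apply: conj_gt => //; lia.
Qed.

End Conj.


Section Psi.
Variable n : nat.
Local Notation N := n.-1.
Local Notation VB := (grp_eq (@VBrel n)).
Local Notation HE := (grp_eq (@Hrel n)).
Local Notation R := (rho_at n).
Local Notation S := (sig_at n).

Definition goodf (f : nat -> nat) :=
  (forall x, x < n -> f x < n) /\ (forall x y, x < n -> y < n -> f x = f y -> x = y).

Definition relf (f : nat -> nat) (g : Hgen n) : Hgen n :=
  odflt g (insub (insubd (val g).1 (f (val g).1), insubd (val g).2 (f (val g).2))).

Lemma hgen_eq (g h : Hgen n) :
  val (val g).1 = val (val h).1 -> val (val g).2 = val (val h).2 -> g = h.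
Proof.
move: g h => [[a b] Hg] [[c d] Hh] /= H1 H2; apply: val_inj => /=.
by congr pair; apply: val_inj.
Qed.

Lemma relf_val f g : goodf f ->
  val (val (relf f g)).1 = f (val (val g).1) /\ val (val (relf f g)).2 = f (val (val g).2).
Proof.
move=> [Hr Hi]; rewrite /relf; case: insubP => [g' _ Hv | Hn] /=.
  by rewrite Hv /= !val_insubd !Hr.
exfalso; move: Hn; rewrite negbK => /eqP /(congr1 val); rewrite !val_insubd !Hr //.
move=> /Hi E; have := valP g; rewrite /= -(inj_eq val_inj) /= E //; by rewrite eqxx.
Qed.

Lemma goodf_inj f x y : goodf f -> x < n -> y < n -> (f x == f y) = (x == y).
Proof.
move=> [_ Hi] Hx Hy; apply/eqP/eqP => [/Hi|->] //; exact.
Qed.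

Definition rl f (l : bool * Hgen n) := (l.1, relf f l.2).

Lemma Heq_map f h h' : goodf f -> HE h h' -> HE (map (rl f) h) (map (rl f) h').
Proof.
move=> Gf; elim => {h h'}.
- move=> w; reflexivity.
- by move=> u v _ IH; symmetry.
- by move=> u v w _ IH1 _ IH2; transitivity (map (rl f) v).
- by move=> u u' v v' _ IH1 _ IH2; rewrite !map_cat; apply: ge_cat.
- by move=> b g /=; apply: ge_cancel.
move=> u v [] g h.
- move=> Hc; apply: ge_rel; apply: h_comm.
  have [A1 A2] := relf_val g Gf; have [B1 B2] := relf_val h Gf.
  move: Hc; rewrite -!(inj_eq val_inj) /= A1 A2 B1 B2 !goodf_inj ?ltn_ord //.
- move=> E Hne; apply: ge_rel; apply: h_braid.
  + have [A1 A2] := relf_val g Gf; have [B1 B2] := relf_val h Gf.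
    by apply: val_inj; rewrite A2 B1 E.
  + have [A1 A2] := relf_val g Gf; have [B1 B2] := relf_val h Gf.
    by move: Hne; rewrite -!(inj_eq val_inj) /= A1 B2 !goodf_inj ?ltn_ord.
Qed.


Lemma ltN (i : 'I_N) : i.+1 < n.
Proof. have := ltn_ord i; lia. Qed.
Definition lo (i : 'I_N) : 'I_n := Ordinal (ltnW (ltN i)).
Definition hi (i : 'I_N) : 'I_n := Ordinal (ltN i).
Lemma lohi (i : 'I_N) : (lo i, hi i).1 != (lo i, hi i).2.
Proof. by rewrite /= -(inj_eq val_inj) /= neq_ltn ltnSn. Qed.
Definition xs (i : 'I_N) : Hgen n := exist _ (lo i, hi i) (lohi i).

Fixpoint psi (w : word (VBgen n)) : word (Hgen n) * seq nat :=
  match w with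
  | [::] => ([::], [::])
  | (b, Sig i) :: w' => let p := psi w' in ((b, xs i) :: p.1, p.2)
  | (b, Rho i) :: w' => let p := psi w' in (map (rl (sw i)) p.1, val i :: p.2)
  end.

Definition actn (p : seq nat) (x : nat) := foldr sw x p.
Definition relab p h := map (rl (actn p)) h.

Lemma goodf_id : goodf id. Proof. by split. Qed.
Lemma goodf_sw m : m.+1 < n -> goodf (sw m).
Proof.
move=> Hm; split.
  by move=> x Hx; rewrite /sw; repeat case: eqP => //; lia.
by move=> x y _ _ E; rewrite -(swK m x) E swK.
Qed.
Lemma goodf_comp f f' : goodf f -> goodf f' -> goodf (f \o f').
Proof.
move=> [H1 H2] [H1' H2']; split => [x Hx|x y Hx Hy E] /=; first by apply: H1; apply: H1'.
by apply: H2'; rewrite // ; apply: H2 => //; apply: H1'.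
Qed.
Lemma goodf_actn p : all (fun m => m.+1 < n) p -> goodf (actn p).
Proof.
elim: p => [|m p IH] /=; first by split.
case/andP => Hm Hp; exact: (goodf_comp (goodf_sw Hm) (IH Hp)).
Qed.

Lemma relf_comp f f' g : goodf f -> goodf f' -> relf f (relf f' g) = relf (f \o f') g.
Proof.
move=> G G'; have GG := goodf_comp G G'.
have [A1 A2] := relf_val g G'; have [B1 B2] := relf_val (relf f' g) G.
have [C1 C2] := relf_val g GG.
by apply: hgen_eq; [rewrite B1 C1 A1 | rewrite B2 C2 A2].
Qed.
Lemma relf_ext f f' g : f (val (val g).1) = f' (val (val g).1) ->
  f (val (val g).2) = f' (val (val g).2) -> relf f g = relf f' g.
Proof. by rewrite /relf => -> ->. Qed.
Lemma relf_id g : relf id g = g.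
Proof. by have [A1 A2] := relf_val g goodf_id; apply: hgen_eq. Qed.

Lemma relab_ext p p' h : actn p =1 actn p' -> relab p h = relab p' h.
Proof.
move=> E; apply: eq_map => -[b g]; rewrite /rl /=; congr pair; exact: relf_ext.
Qed.
Lemma relab_nil h : relab [::] h = h.
Proof.
rewrite /relab -[RHS]map_id; apply: eq_map => -[b g].
by rewrite /rl /= -[in RHS](relf_id g).
Qed.

Lemma psi_ok u : all (fun m => m.+1 < n) (psi u).2.
Proof.
elim: u => [|[b [i|i]] u IH] //=; rewrite IH andbT; exact: ltN.
Qed.

Lemma psi_cat u v :
  psi (u ++ v) = ((psi u).1 ++ relab (psi u).2 (psi v).1, (psi u).2 ++ (psi v).2).
Proof.
elim: u => [|[b [i|i]] u IH] /=.
- by rewrite relab_nil; case: (psi v).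
- by rewrite IH.
- rewrite IH /= map_cat; congr (_ ++ _, _).
  rewrite /relab -map_comp; apply: eq_map => -[c g]; rewrite /rl /=.
  rewrite relf_comp //; [exact: goodf_sw (ltN i) | exact: goodf_actn (psi_ok u)].
Qed.

Lemma actn_cat p q x : actn (p ++ q) x = actn p (actn q x).
Proof. by rewrite /actn foldr_cat. Qed.

Lemma Heq_relab p h h' : all (fun m => m.+1 < n) p -> HE h h' -> HE (relab p h) (relab p h').
Proof. by move=> Hp; apply: Heq_map; apply: goodf_actn. Qed.

Lemma psi_inv u v : VB u v ->
  HE (psi u).1 (psi v).1 /\ actn (psi u).2 =1 actn (psi v).2.
Proof.
elim => {u v}.
- by move=> w; split; [reflexivity|].
- by move=> u v _ [H1 H2]; split; [symmetry|move=> x; rewrite H2].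
- move=> u v w _ [H1 H2] _ [H3 H4]; split; first by transitivity (psi v).1.
  by move=> x; rewrite H2 H4.
- move=> u u' v v' _ [H1 H2] _ [H3 H4]; rewrite !psi_cat /=; split.
    apply: ge_cat => //.
    rewrite (relab_ext _ H2); apply: Heq_relab => //; exact: psi_ok.
  by move=> x; rewrite !actn_cat H2 H4.
- move=> b [i|i] /=; first by split => //; apply: ge_cancel.
  by split; [reflexivity| move=> x; rewrite /actn /= swK].
move=> u v []; clear u v.
- move=> i j E; have {}E : nat_of_ord j = (nat_of_ord i).+1 by []; rewrite /=; split => //; apply: ge_rel; apply: h_braid.
    by apply: val_inj; rewrite /= E.
  by rewrite -(inj_eq val_inj) /=; apply/eqP; lia.
- move=> i j Hf /=; split => //; apply: ge_rel; apply: h_comm.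
  rewrite -!(inj_eq val_inj) /=; move: Hf; rewrite /far => Hf.
  by apply/and4P; split; apply/eqP; lia.
- move=> i j E; have {}E : nat_of_ord j = (nat_of_ord i).+1 by []; rewrite /=; split; first reflexivity.
  move=> x; rewrite /actn /= E; rewrite /sw; repeat case: eqP; lia.
- move=> i j Hf /=; split; first reflexivity.
  move=> x; move: Hf; rewrite /actn /far /sw /=; repeat case: eqP; lia.
- move=> i /=; split; first reflexivity. by move=> x; rewrite /actn /= swK.
- move=> i j Hf /=; split => //; rewrite /rl /=.
  have -> : relf (sw j) (xs i) = xs i; last by reflexivity.
  have [A1 A2] := relf_val (xs i) (goodf_sw (ltN j)).
  move: Hf; rewrite /far => Hf.
  by apply: hgen_eq; rewrite ?A1 ?A2 /= !sw_o //; apply/eqP; lia.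
- move=> i j E; have {}E : nat_of_ord j = (nat_of_ord i).+1 by []; rewrite /= /rl /=; split; last by [].
  have -> : relf (sw i) (relf (sw j) (xs i)) = xs j; last by reflexivity.
  have [A1 A2] := relf_val (xs i) (goodf_sw (ltN j)).
  have [B1 B2] := relf_val (relf (sw j) (xs i)) (goodf_sw (ltN i)).
  by apply: hgen_eq; rewrite ?B1 ?B2 ?A1 ?A2 /= E /sw; repeat case: eqP; lia.
Qed.

End Psi.


Section PsiPhi.
Variable n : nat.
Local Notation N := n.-1.
Local Notation VB := (grp_eq (@VBrel n)).
Local Notation HE := (grp_eq (@Hrel n)).
Local Notation R := (rho_at n).
Local Notation S := (sig_at n).
Local Notation psi := (@psi n).
Local Notation relab := (@relab n).

Lemma psi_R m w (H : m < N) : psi (R m ++ w) = (map (rl (sw m)) (psi w).1, m :: (psi w).2).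
Proof. by rewrite (rho_at_lt H). Qed.
Lemma psi_S m w (H : m < N) : psi (S m ++ w) = ((false, xs (Ordinal H)) :: (psi w).1, (psi w).2).
Proof. by rewrite (sig_at_lt H). Qed.

Lemma allN l : all (fun m => m < N) l -> all (fun m => m.+1 < n) l.
Proof. by apply: sub_all => m /=; lia. Qed.

Lemma relab_cons m l h : m.+1 < n -> all (fun m => m.+1 < n) l ->
  map (rl (sw m)) (relab l h) = relab (m :: l) h.
Proof.
move=> Hm Hl; rewrite /relab -map_comp; apply: eq_map => -[c g]; rewrite /rl /=.
by rewrite relf_comp //; [exact: goodf_sw | exact: goodf_actn].
Qed.

Lemma psi_rw l w : all (fun m => m < N) l ->
  psi (rw n l ++ w) = (relab l (psi w).1, l ++ (psi w).2).
Proof.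
elim: l => [|m l IH] /=; first by rewrite relab_nil; case: (psi w).
case/andP => Hm Hl; rewrite rw_cons -catA psi_R; [|lia]. rewrite IH //= relab_cons //; last exact: allN.
lia.
Qed.

Lemma actn_fix p x : all (fun m => (x != m) && (x != m.+1)) p -> actn p x = x.
Proof.
elim: p => [|m p IH] //= /andP [/andP [H1 H2] Hp].
by rewrite /actn /= -/(actn p x) IH // sw_o.
Qed.

Lemma actn_rev p x : actn (rev p) (actn p x) = x.
Proof.
elim: p x => [|m p IH] x //=.
by rewrite rev_cons -cats1 actn_cat /actn /= swK -/(actn p x) -/(actn (rev p) _) IH.
Qed.

Lemma Dl_a a b : a < b -> actn (rev (iota a.+1 (b - a.+1))) a = a.
Proof.
move=> H; apply: actn_fix; rewrite all_rev; apply: all_int => m Hm.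
apply/andP; split; apply/eqP; lia.
Qed.

Lemma Dl_a1 a d : actn (rev (iota a.+1 d)) a.+1 = a.+1 + d.
Proof.
elim: d => [|d IH]; first by rewrite addn0.
have -> : iota a.+1 d.+1 = iota a.+1 d ++ [:: a.+1 + d] by rewrite -(addn1 d) iotaD.
by rewrite rev_cat /= /actn /= -/(actn _ _) IH sw_m addnS.
Qed.

Lemma Dl_b a b : a < b -> actn (rev (iota a.+1 (b - a.+1))) a.+1 = b.
Proof. move=> H; rewrite Dl_a1; lia. Qed.

Lemma allD a b : b <= N -> all (fun m => m < N) (rev (iota a.+1 (b - a.+1))).
Proof. by move=> H; rewrite all_rev; apply: all_int => m Hm; lia. Qed.
Lemma allU a b : b <= N -> all (fun m => m < N) (iota a.+1 (b - a.+1)).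
Proof. by move=> H; apply: all_int => m Hm; lia. Qed.

Lemma psi_xg g : (psi (xg g)).1 = [:: (false, g)] /\ actn (psi (xg g)).2 =1 id.
Proof.
have Hk := ltn_ord (val g).1; have Hl := ltn_ord (val g).2.
have Hne := valP g; move: Hne; rewrite /= -(inj_eq val_inj) /= => Hne.
rewrite /xg xw_xwn.
set k := nat_of_ord (val g).1 in Hk Hne *; set l := nat_of_ord (val g).2 in Hl Hne *.
case: (ltngtP k l) => Hkl; last by rewrite Hkl eqxx in Hne. all: idtac.
- have HkN : k < N by lia.
  rewrite xwn_lt // /Dw psi_rw ?allD; last by lia.
  rewrite psi_S // -[Uw n k l]cats0 /Uw psi_rw ?allU /=; last by lia.
  split.
    rewrite /relab /= /rl /=; congr [:: (_, _)].
    have HlN : l <= N by lia.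
    have [A1 A2] := relf_val (xs (Ordinal HkN)) (goodf_actn (allN (allD k HlN))).
    apply: hgen_eq; rewrite ?A1 ?A2 /= ?Dl_a ?Dl_b //; lia.
  by move=> x; rewrite cats0 actn_cat actn_rev.
all: try done.
- have HlN : l < N by lia.
  rewrite xwn_gt // /Dw psi_rw ?allD; last by lia.
  rewrite -!catA psi_R // psi_S // psi_R // -[Uw n l k]cats0 /Uw psi_rw ?allU /=; last by lia.
  split.
    rewrite /relab /= /rl /=; congr [:: (_, _)].
    have HkN : k <= N by lia.
    have Hl1 : l.+1 < n by lia.
    have G1 := goodf_actn (allN (allD l HkN)).
    rewrite relf_comp; [|exact: G1 | exact: goodf_sw].
    have [A1 A2] := relf_val (xs (Ordinal HlN)) (goodf_comp G1 (goodf_sw Hl1)).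
    apply: hgen_eq; rewrite ?A1 ?A2 /= ?sw_m ?sw_m1 ?Dl_a ?Dl_b //; lia.
  move=> x; rewrite cats0 actn_cat /actn /= swK -/(actn _ _).
  by rewrite actn_rev.
all: try done. Qed.


Lemma psi_ixg g : HE (psi (inv_word (xg g))).1 [:: (true, g)] /\
  actn (psi (inv_word (xg g))).2 =1 id.
Proof.
have [H1 H2] := psi_inv (@cancel_l _ (@VBrel n) (xg g)).
have [X1 X2] := psi_xg g.
move: H1 H2; rewrite psi_cat /= X1 => H1 H2.
have Hid : actn (psi (inv_word (xg g))).2 =1 id.
  by move=> x; have := H2 x; rewrite actn_cat X2.
split => //.
move: H1; rewrite (relab_ext _ (p' := [::]) Hid) relab_nil => H1.
transitivity (((psi (inv_word (xg g))).1 ++ [:: (false, g)]) ++ [:: (true, g)]).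
  rewrite -catA; transitivity ((psi (inv_word (xg g))).1 ++ [::]); first by rewrite cats0; reflexivity.
  apply: ge_cat; first reflexivity. symmetry; exact: (ge_cancel _ false g).
rewrite H1; reflexivity.
Qed.

Lemma phi_cons (l : bool * Hgen n) u : phi (l :: u) = (if l.1 then inv_word (xg l.2) else xg l.2) ++ phi u.
Proof. by []. Qed.
Lemma phi_cat (u v : word (Hgen n)) : phi (u ++ v) = phi u ++ phi v.
Proof. by rewrite /phi map_cat flatten_cat. Qed.

Lemma psi_phi u : HE (psi (phi u)).1 u /\ actn (psi (phi u)).2 =1 id.
Proof.
elim: u => [|[b g] u [IH1 IH2]]; first by split; [reflexivity|].
rewrite phi_cons psi_cat /=.
have [L1 L2] : HE (psi (if b then inv_word (xg g) else xg g)).1 [:: (b, g)] /\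
     actn (psi (if b then inv_word (xg g) else xg g)).2 =1 id.
  case: b; first exact: psi_ixg.
  by have [X1 X2] := psi_xg g; rewrite X1; split; [reflexivity|].
split; last by move=> x; rewrite actn_cat IH2 L2.
rewrite (relab_ext _ (p' := [::]) L2) relab_nil.
change ((b, g) :: u) with ([:: (b, g)] ++ u).
by apply: ge_cat.
Qed.

Lemma part3a u v : VB (phi u) (phi v) -> HE u v.
Proof.
move=> /psi_inv [H _].
have [A _] := psi_phi u; have [B _] := psi_phi v.
transitivity (psi (phi u)).1; first by symmetry.
by transitivity (psi (phi v)).1.
Qed.

End PsiPhi.


Lemma sw_inj m x y : (sw m x == sw m y) = (x == y).
Proof. apply/eqP/eqP => [E|->] //; by rewrite -(swK m x) E swK. Qed.

Section Reach.
Variable n : nat.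
Lemma sw_lt m x : m.+1 < n -> x < n -> sw m x < n.
Proof. by move=> H1 H2; rewrite /sw; repeat case: eqP; lia. Qed.

Lemma reach3 (Q : nat -> nat -> nat -> Prop) :
  (forall m i k j, m.+1 < n -> i < n -> k < n -> j < n ->
     Q (sw m i) (sw m k) (sw m j) -> Q i k j) ->
  Q 0 1 2 ->
  forall i k j, i < n -> k < n -> j < n -> i != k -> k != j -> i != j -> Q i k j.
Proof.
move=> Hs H0 i k j.
have [M HM] := ubnP (4 * i + 2 * k + j).
elim: M i k j HM => // M IH i k j HM Hi Hk Hj H1 H2 H3.
have step : forall m, m.+1 < n -> 4 * sw m i + 2 * sw m k + sw m j < 4 * i + 2 * k + j ->
    Q i k j.
  move=> m Hm Hlt; apply: (Hs m) => //; apply: IH; rewrite ?sw_inj ?sw_lt //; lia.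
case: (posnP i) => Hi0.
  subst i. case: (ltnP 1 k) => Hk1.
    apply: (step k.-1); first lia.
    by rewrite /sw; repeat case: eqP; lia.
  have Ek : k = 1 by lia. subst k.
  case: (ltnP 2 j) => Hj2.
    apply: (step j.-1); first lia.
    by rewrite /sw; repeat case: eqP; lia.
  have -> : j = 2 by lia. exact: H0.
apply: (step i.-1); first lia.
by rewrite /sw; repeat case: eqP; lia.
Qed.

Lemma reach4 (Q : nat -> nat -> nat -> nat -> Prop) :
  (forall m i j k l, m.+1 < n -> i < n -> j < n -> k < n -> l < n ->
     Q (sw m i) (sw m j) (sw m k) (sw m l) -> Q i j k l) ->
  Q 0 1 2 3 ->
  forall i j k l, i < n -> j < n -> k < n -> l < n ->
    [&& i != j, i != k, i != l, j != k, j != l & k != l] -> Q i j k l.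
Proof.
move=> Hs H0 i j k l.
have [M HM] := ubnP (8 * i + 4 * j + 2 * k + l).
elim: M i j k l HM => // M IH i j k l HM Hi Hj Hk Hl Hd.
have step : forall m, m.+1 < n ->
    8 * sw m i + 4 * sw m j + 2 * sw m k + sw m l < 8 * i + 4 * j + 2 * k + l ->
    Q i j k l.
  move=> m Hm Hlt; apply: (Hs m) => //; apply: IH; rewrite ?sw_inj ?sw_lt //; lia.
move: Hd => /and5P [D1 D2 D3 D4 /andP [D5 D6]].
case: (posnP i) => Hi0; last first.
  apply: (step i.-1); first lia.
  by rewrite /sw; repeat case: eqP; lia.
subst i. case: (ltnP 1 j) => Hj1.
  apply: (step j.-1); first lia.
  by rewrite /sw; repeat case: eqP; lia.
have Ej : j = 1 by lia. subst j.
case: (ltnP 2 k) => Hk2.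
  apply: (step k.-1); first lia.
  by rewrite /sw; repeat case: eqP; lia.
have Ek : k = 2 by lia. subst k.
case: (ltnP 3 l) => Hl3.
  apply: (step l.-1); first lia.
  by rewrite /sw; repeat case: eqP; lia.
have -> : l = 3 by lia. exact: H0.
Qed.
End Reach.


Section Main.
Variable n : nat.
Local Notation N := n.-1.
Local Notation VB := (grp_eq (@VBrel n)).
Local Notation HE := (grp_eq (@Hrel n)).
Local Notation R := (rho_at n).
Local Notation S := (sig_at n).
Local Notation xwn := (@xwn n).

Lemma xg_xwn (g : Hgen n) : xg g = xwn (val g).1 (val g).2.
Proof. by []. Qed.

Lemma conj_xg j g w : j < N ->
  VB (R j ++ xg g ++ R j ++ w) (xg (relf (sw j) g) ++ w).
Proof.
move=> Hj.
have Hj1 : j.+1 < n by lia.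
have [B1 B2] := relf_val g (goodf_sw Hj1).
rewrite !xg_xwn.
have -> : nat_of_ord (val (relf (sw j) g)).1 = sw j (val g).1 := B1.
have -> : nat_of_ord (val (relf (sw j) g)).2 = sw j (val g).2 := B2.
apply: conj_x => //.
by have := valP g; rewrite /= -(inj_eq val_inj).
Qed.

Lemma letter_R (b : bool) (j : 'I_N) : VB [:: (b, Rho j)] (R j).
Proof.
rewrite (rho_at_lt (ltn_ord j)).
have -> : Ordinal (ltn_ord j) = j by apply: val_inj.
case: b; [exact: rho_inv | reflexivity].
Qed.

Lemma inv_R m : m < N -> VB (inv_word (R m)) (R m).
Proof.
move=> H; rewrite (rho_at_lt H) /inv_word /=; exact: rho_inv.
Qed.

Lemma conj_ixg j g w : j < N ->
  VB (R j ++ inv_word (xg g) ++ R j ++ w) (inv_word (xg (relf (sw j) g)) ++ w).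
Proof.
move=> Hj.
transitivity (inv_word (R j ++ xg g ++ R j) ++ w).
  rewrite !inv_word_cat -!catA !inv_R //; reflexivity.
apply: ge_cat; last reflexivity.
apply: inv_congr; have := conj_xg g [::] Hj; rewrite !cats0; exact.
Qed.

Lemma conj_phi j u : j < N -> VB (R j ++ phi u ++ R j) (phi (map (rl (sw j)) u)).
Proof.
move=> Hj; elim: u => [|[b g] u IH] /=; first exact: rr0.
rewrite !phi_cons /= -!catA.
transitivity (R j ++ (if b then inv_word (xg g) else xg g) ++ R j ++ (R j ++ phi u ++ R j)).
  by rewrite (rr _ Hj); reflexivity.
rewrite IH; case: b; [exact: conj_ixg | exact: conj_xg].
Qed.

Lemma xg_xs (i : 'I_N) : xg (xs i) = [:: (false, Sig i)].
Proof.
rewrite xg_xwn /= xwn_lt // D0 U0 /= cats0 (sig_at_lt (ltn_ord i)).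
by congr [:: (_, Sig _)]; apply: val_inj.
Qed.

Lemma phi_xs (b : bool) (i : 'I_N) : phi [:: (b, xs i)] = [:: (b, Sig i)].
Proof. by rewrite phi_cons /= xg_xs cats0; case: b. Qed.

Lemma shape_eq (T : Type) (x y : T) (c z t : seq T) :
  x :: c ++ y :: (z ++ t) = [:: x] ++ (c ++ y :: z) ++ t.
Proof. by rewrite /= -catA. Qed.

Lemma conj_in_phi c b i : exists u, VB (c ++ (b, Sig i) :: inv_word c) (phi u).
Proof.
elim: c => [|[b' [j|j]] c [u IH]].
- by exists [:: (b, xs i)]; rewrite phi_xs; reflexivity.
- exists ([:: (b', xs j)] ++ u ++ [:: (~~ b', xs j)]).
  rewrite !phi_cat !phi_xs inv_word_cons /= shape_eq.
  by rewrite IH; reflexivity.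
- exists (map (rl (sw j)) u).
  rewrite -conj_phi // -IH inv_word_cons /= shape_eq.
  rewrite !letter_R; reflexivity.
Qed.

Lemma part2 (w : word (VBgen n)) : in_H w -> exists u, VB w (phi u).
Proof.
case=> cs; elim: cs w => [|[[c b] i] cs IH] w /= E.
  by exists [::].
have [u1 H1] := conj_in_phi c b i.
have [u2 H2] := IH _ (ge_refl _ _).
exists (u1 ++ u2); rewrite phi_cat -H1 -H2; exact: E.
Qed.

Lemma inv_rw l : all (fun m => m < N) l -> VB (inv_word (rw n l)) (rw n (rev l)).
Proof.
elim: l => [|m l IH] /=; first reflexivity.
case/andP => Hm Hl; rewrite rw_cons inv_word_cat inv_R // IH //.
by rewrite rev_cons -cats1 rw_cat /rw /= cats0; reflexivity.
Qed.

Lemma part1 (g : Hgen n) : in_H (xg g).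
Proof.
have Hk := ltn_ord (val g).1; have Hl := ltn_ord (val g).2.
have Hne := valP g; move: Hne; rewrite /= -(inj_eq val_inj) /= => Hne.
rewrite xg_xwn.
set k := nat_of_ord (val g).1 in Hk Hne *; set l := nat_of_ord (val g).2 in Hl Hne *.
case: (ltngtP k l) => Hkl; last by rewrite Hkl eqxx in Hne.
- have HkN : k < N by lia.
  exists [:: (Dw n k l, false, Ordinal HkN)] => /=.
  rewrite cats0 xwn_lt // -[_ :: inv_word _]cat1s (sig_at_lt HkN) /Dw inv_rw ?allD; last by lia.
  by rewrite revK; reflexivity.
all: try done.
- have HlN : l < N by lia.
  exists [:: (Dw n l k ++ R l, false, Ordinal HlN)] => /=.
  rewrite cats0 xwn_gt // -[_ :: inv_word _]cat1s (sig_at_lt HlN) inv_word_cat inv_R // /Dw inv_rw ?allD; last by lia.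
  by rewrite revK -!catA; reflexivity.
all: try done. Qed.

End Main.


Section Rels.
Variable n : nat.
Local Notation N := n.-1.
Local Notation VB := (grp_eq (@VBrel n)).
Local Notation HE := (grp_eq (@Hrel n)).
Local Notation R := (rho_at n).
Local Notation S := (sig_at n).
Local Notation xwn := (@xwn n).

Lemma xwn_conj m k l : m < N -> k < n -> l < n -> k != l ->
  VB (xwn k l) (R m ++ xwn (sw m k) (sw m l) ++ R m).
Proof.
move=> Hm Hk Hl Hkl.
have Hm1 : m.+1 < n by lia.
have := @conj_x n m (sw m k) (sw m l) [::] Hm (sw_lt Hm1 Hk) (sw_lt Hm1 Hl).
rewrite sw_inj !swK !cats0 => H; symmetry; exact: H.
Qed.

Lemma peel (a x y : word (VBgen n)) : VB x y -> VB (a ++ x ++ a) (a ++ y ++ a).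
Proof. by move=> H; rewrite H; reflexivity. Qed.

Lemma conj3 m (X Y : word (VBgen n)) : m < N -> VB (X ++ Y ++ X) (Y ++ X ++ Y) ->
  VB ((R m ++ X ++ R m) ++ (R m ++ Y ++ R m) ++ (R m ++ X ++ R m))
     ((R m ++ Y ++ R m) ++ (R m ++ X ++ R m) ++ (R m ++ Y ++ R m)).
Proof.
move=> Hm E; rewrite -!catA !(rr _ Hm).
apply: ge_cat; first reflexivity.
rewrite !catA; apply: ge_cat; last reflexivity.
by rewrite -?catA.
Qed.

Lemma conj2 m (X Y : word (VBgen n)) : m < N -> VB (X ++ Y) (Y ++ X) ->
  VB ((R m ++ X ++ R m) ++ (R m ++ Y ++ R m)) ((R m ++ Y ++ R m) ++ (R m ++ X ++ R m)).
Proof.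
move=> Hm E; rewrite -!catA !(rr _ Hm).
apply: ge_cat; first reflexivity.
rewrite !catA; apply: ge_cat; last reflexivity.
by rewrite -?catA.
Qed.

Lemma xwn_S a : xwn a a.+1 = S a.
Proof. by rewrite xwn_lt // D0 U0 /= cats0. Qed.

Lemma rel3 i k j : i < n -> k < n -> j < n -> i != k -> k != j -> i != j ->
  VB (xwn i k ++ xwn k j ++ xwn i k) (xwn k j ++ xwn i k ++ xwn k j).
Proof.
move=> Hi Hk Hj H1 H2 H3.
have Hn : 2 < n by lia.
move: (H1) (H2) (H3); apply: (@reach3 n (fun i k j => i != k -> k != j -> i != j ->
  VB (xwn i k ++ xwn k j ++ xwn i k) (xwn k j ++ xwn i k ++ xwn k j))) => //.
  move=> m i' k' j' Hm Hi' Hk' Hj' IH D1 D2 D3.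
  have HmN : m < N by lia.
  have := IH; rewrite !sw_inj => /(_ D1 D2 D3) E.
  rewrite (xwn_conj HmN Hi' Hk' D1) (xwn_conj HmN Hk' Hj' D2).
  exact: conj3.
move=> _ _ _; rewrite !xwn_S.
have := sbraid [::] (_ : 1 < N); rewrite !cats0; apply; lia.
Qed.

Lemma rel4 i j k l : i < n -> j < n -> k < n -> l < n ->
  [&& i != j, i != k, i != l, j != k, j != l & k != l] ->
  VB (xwn i j ++ xwn k l) (xwn k l ++ xwn i j).
Proof.
move=> Hi Hj Hk Hl Hd.
have Hn : 3 < n by move: Hd => /and5P [? ? ? ? /andP [? ?]]; lia.
move: (Hd); apply: (@reach4 n (fun i j k l =>
  [&& i != j, i != k, i != l, j != k, j != l & k != l] ->
  VB (xwn i j ++ xwn k l) (xwn k l ++ xwn i j))) => //.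
  move=> m i' j' k' l' Hm Hi' Hj' Hk' Hl' IH Hd'.
  have HmN : m < N by lia.
  have := IH; rewrite !sw_inj => /(_ Hd') E.
  move: Hd' => /and5P [D1 D2 D3 D4 /andP [D5 D6]].
  rewrite (xwn_conj HmN Hi' Hj' D1) (xwn_conj HmN Hk' Hl' D6).
  exact: conj2.
move=> _; rewrite (xwn_S 0) (xwn_S 2).
have := scomm [::] (_ : 0 < N) (_ : 2 < N) (_ : far 0 2); rewrite !cats0; apply => //; lia.
Qed.

Lemma part3b (u v : word (Hgen n)) : HE u v -> VB (phi u) (phi v).
Proof.
elim => {u v}.
- move=> w; reflexivity.
- by move=> u v _ IH; symmetry.
- by move=> u v w _ IH1 _ IH2; transitivity (phi v).
- by move=> u u' v v' _ IH1 _ IH2; rewrite !phi_cat; apply: ge_cat.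
- move=> [] g; rewrite /phi /= cats0; [exact: cancel_l | exact: cancel_r].
move=> u v []; clear u v.
- move=> g h Hc; rewrite /phi /= !cats0 !xg_xwn.
  have := valP g; have := valP h; rewrite /= -!(inj_eq val_inj) => Dh Dg.
  move: Hc; rewrite -!(inj_eq val_inj) => /and4P [C1 C2 C3 C4].
  apply: rel4 => //; by rewrite Dg Dh C1 C2 C3 C4.
- move=> g h E Hne; rewrite /phi /= !cats0 !xg_xwn.
  have := valP g; have := valP h; rewrite /= -!(inj_eq val_inj) => Dh Dg.
  move: Hne; rewrite -(inj_eq val_inj) => Hne.
  rewrite -E; rewrite -E in Dh.
  apply: rel3 => //.
Qed.

End Rels.

Theorem proposition6p2 (n : nat) :
  (forall g : Hgen n, in_H (xg g)) /\
  (forall w : word (VBgen n), in_H w -> exists u : word (Hgen n), VBeq w (phi u)) /\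
  (forall u v : word (Hgen n), VBeq (phi u) (phi v) <-> Heq u v).
Proof.
split; first exact: part1.
split; first exact: part2.
move=> u v; split; [exact: part3a | exact: part3b].
Qed.
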